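(* In the finite element setting described in the context, let each element mass matrix $M_e$ be symmetric positive definite, fix an integer $0<r<m$, and assume $\lambda_{m-r}(K_e,M_e)>0$ for every element $e$. For each element define $$\overline{M}_e=M_e+V_e\,g(D_{e,2})\,V_e^T,\qquad V_e=M_eU_{e,2},\qquad g(\lambda)=\frac{\lambda}{\lambda_{m-r}(K_e,M_e)}-1,$$ where $D_{e,2}=\mathrm{diag}(\lambda_{m-r+1}(K_e,M_e),\dots,\lambda_m(K_e,M_e))$ and $U_{e,2}\in\mathbb{R}^{m\times r}$ has as columns the corresponding $M_e$-orthonormal eigenvectors of $(K_e,M_e)$ ($g$ applied entrywise to the diagonal). Let $M=\sum_eL_e^TM_eL_e$ and $\overline{M}=\sum_eL_e^T\overline{M}_eL_e$. Then for all $i=1,\dots,n$, $$1\le\frac{\omega_i}{\overline{\omega}_i}\le\max_e\frac{\omega_{m,e}}{\omega_{m-r,e}},$$ where $\omega_i=\sqrt{\lambda_i(K,M)}$, $\overline{\omega}_i=\sqrt{\lambda_i(K,\overline{M})}$ and $\omega_{j,e}=\sqrt{\lambda_j(K_e,M_e)}$.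
   Context: Finite element setting: there are $n$ global degrees of freedom and $N$ elements, each with $m$ local degrees of freedom. For each element $e$, $L_e\in\mathbb{R}^{m\times n}$ satisfies $L_e^T=[\mathbf{e}_{i_1},\dots,\mathbf{e}_{i_m}]$ for distinct indices $i_1,\dots,i_m$ (columns of $I_n$), and every global index appears for at least one element. Element matrices are assembled as $A=\sum_{e=1}^N L_e^TA_eL_e$. The global stiffness matrix is $K=\sum_e L_e^TK_eL_e$ with each $K_e$ symmetric positive semidefinite, and $K$ is assumed symmetric positive definite. Generalized eigenvalues of a pair ($A$ symmetric, $B$ symmetric positive definite) are numbered in ascending order; ''$M_e$-orthonormal'' means $U_{e,2}^TM_eU_{e,2}=I_r$. *)

(* Defs.v *)
From HB Require Import structures.
From mathcomp Require Import all_boot all_order all_algebra.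
From mathcomp Require Import boolp classical_sets reals.
Set Implicit Arguments. Unset Strict Implicit. Unset Printing Implicit Defensive.
Import Order.TTheory GRing.Theory Num.Theory.
Local Open Scope ring_scope.

Section Defs.
Variable R : realType.

Definition qform n (A : 'M[R]_n) (x : 'cV[R]_n) : R := (x^T *m A *m x) ord0 ord0.

Definition symmetric n (A : 'M[R]_n) : Prop := A^T = A.
Definition psd n (A : 'M[R]_n) : Prop := symmetric A /\ forall x, 0 <= qform A x.
Definition spd n (A : 'M[R]_n) : Prop :=
  symmetric A /\ forall x : 'cV[R]_n, x != 0 -> 0 < qform A x.

Definition pencil_poly n (A B : 'M[R]_n) : {poly R} :=
  \det (map_mx polyC A - 'X *: map_mx polyC B).

(* s is the ascending list (with multiplicity) of generalized eigenvalues of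
   (A,B): the roots of det(A - x B) = det(B) * prod_i (lambda_i - x). *)
Definition is_geneig_list n (A B : 'M[R]_n) (s : seq R) : Prop :=
  [/\ size s = n, sorted <=%R s &
      pencil_poly A B = \det B *: \prod_(x <- s) (x%:P - 'X)].

Definition geneigs n (A B : 'M[R]_n) : seq R :=
  xget [::] (fun s => is_geneig_list A B s).

(* lambda_i(A,B), numbered from 0 (lambda_0 is the smallest). *)
Definition geneig n (A B : 'M[R]_n) (i : nat) : R := nth 0 (geneigs A B) i.

(* Boolean (0/1) restriction matrix L_e with L_e^T = [e_{idx 0}, ..., e_{idx (m-1)}] *)
Definition restr_mx m n (idx : 'I_m -> 'I_n) : 'M[R]_(m, n) :=
  \matrix_(k, j) (idx k == j)%:R.

Definition assemble N m n (idx : 'I_N -> 'I_m -> 'I_n) (A : 'I_N -> 'M[R]_m)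
  : 'M[R]_n :=
  \sum_(e < N) (restr_mx (idx e))^T *m A e *m restr_mx (idx e).

End Defs.

(* Main.v *)
Require Import Defs.
From HB Require Import structures.
From mathcomp Require Import all_boot all_order all_algebra.
From mathcomp Require Import boolp classical_sets reals.
From mathcomp Require Import complex fingroup perm ring zify.
From Stdlib Require Import Lia.
Set Implicit Arguments. Unset Strict Implicit. Unset Printing Implicit Defensive.
Import Order.TTheory GRing.Theory Num.Theory.
Local Open Scope ring_scope.

Section Work.
Variable R : realType.
Local Notation C := (R[i]).
Local Notation f := (real_complex R).

Lemma trmx11 (F : Type) (X : 'M[F]_1) : X^T = X.
Proof. by apply/matrixP=> i j; rewrite !ord1 mxE. Qed.

Lemma spd_ker n (B : 'M[R]_n) (x : 'cV[R]_n) : spd B -> B *m x = 0 -> x = 0.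
Proof.
move=> [_ Bp] Bx; apply/eqP; apply/negPn/negP=> /Bp.
by rewrite /qform -mulmxA Bx mulmx0 mxE ltxx.
Qed.

Lemma spd_unit n (B : 'M[R]_n) : spd B -> B \in unitmx.
Proof.
move=> Bspd; rewrite -row_free_unit -kermx_eq0; apply/eqP/row_matrixP=> i.
rewrite row0; set z := row i _.
have zB : z *m B = 0 by rewrite /z -row_mul mulmx_ker row0.
apply: trmx_inj; rewrite trmx0; apply: (spd_ker Bspd).
by rewrite -{1}(proj1 Bspd) -trmx_mul zB trmx0.
Qed.

Lemma cquad (n : nat) (M : 'M[R]_n) (a b : 'rV[R]_n) : M^T = M ->
  (map_mx f a + 'i%C *: map_mx f b) *m map_mx f M *m
     (map_mx f a - 'i%C *: map_mx f b)^T
  = map_mx f (a *m M *m a^T + b *m M *m b^T).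
Proof.
move=> Ms.
have ii : 'i%C * 'i%C = -1 :> C by rewrite -expr2 sqr_i.
have cross : map_mx f b *m map_mx f M *m (map_mx f a)^T =
             map_mx f a *m map_mx f M *m (map_mx f b)^T.
  by rewrite -[LHS]trmx11 !trmx_mul trmxK !map_trmx Ms mulmxA.
set A := map_mx f a; set B := map_mx f b; set Mc := map_mx f M.
rewrite map_mxD !map_mxM -!map_trmx -/A -/B -/Mc.
rewrite linearB /= linearZ /= mulmxDl -scalemxAl mulmxDl !mulmxBr.
rewrite -!scalemxAl -!scalemxAr !scalerA ii.
move: cross; rewrite -/A -/B -/Mc => ->.
by rewrite scaleN1r opprK addrA subrK.
Qed.
Lemma spd_ge0 n (B : 'M[R]_n) (x : 'cV[R]_n) : spd B -> 0 <= qform B x.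
Proof.
move=> [_ Bp]; have [->|/Bp/ltW//] := eqVneq x 0.
by rewrite /qform mulmx0 mxE.
Qed.

Lemma pencil_eig n (K B : 'M[R]_n) : (0 < n)%N -> K^T = K -> spd B ->
  exists l (u : 'cV[R]_n), u != 0 /\ K *m u = l *: (B *m u).
Proof.
move=> n0 Ks Bspd; have Bu := spd_unit Bspd.
set A := K *m invmx B.
have AB : A *m B = K by rewrite /A mulmxKV.
have [lam /eigenvalueP [v vA vN0]] := eigenvalue_closed (map_mx f A) n0.
have vK : v *m map_mx f K = lam *: (v *m map_mx f B).
  by rewrite -AB map_mxM mulmxA vA -scalemxAl.
set a := map_mx (@complex.Re R) v; set b := map_mx (@complex.Im R) v.
have vE : v = map_mx f a + 'i%C *: map_mx f b.
  by apply/matrixP=> i j; rewrite !mxE; exact: complexE.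
set w := map_mx f a - 'i%C *: map_mx f b.
have := congr1 (fun X => X *m w^T) vK; rewrite /= -scalemxAl {1 2}vE !cquad //;
  last by case: Bspd.
move=> /(congr1 (fun X : 'M[C]_1 => X 0 0)) => H.
have eq1 : f ((a *m K *m a^T) 0 0 + (b *m K *m b^T) 0 0) =
   lam * f ((a *m B *m a^T) 0 0 + (b *m B *m b^T) 0 0) by move: H; rewrite !mxE.
set qK := (_ + _) in eq1; set qB := (_ + _) in eq1.
have qBE : qB = qform B a^T + qform B b^T by rewrite /qB /qform !trmxK.
have qB0 : 0 < qB.
  rewrite qBE; have [a0|aN0] := eqVneq a 0.
    have [b0|bN0] := eqVneq b 0.
      by move: vN0; rewrite vE a0 b0 !map_mx0 scaler0 addr0 eqxx.
    rewrite addrC ltr_wpDr ?spd_ge0 //; apply: (proj2 Bspd).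
    by apply: contra bN0 => /eqP bT0; rewrite -[b]trmxK bT0 trmx0.
  rewrite ltr_wpDr ?spd_ge0 //; apply: (proj2 Bspd).
  by apply: contra aN0 => /eqP aT0; rewrite -[a]trmxK aT0 trmx0.
have lamE : lam = f (qK / qB).
  have fqB : f qB != 0 by rewrite (inj_eq (@complexI R)) gt_eqF.
  by rewrite -[lam](mulfK fqB) -eq1; apply/esym/fmorph_div.
move: vA; rewrite lamE => vA.
have : eigenvalue (map_mx f A) (f (qK / qB)) by apply/eigenvalueP; exists v.
rewrite eigenvalue_root_char -map_char_poly fmorph_root -eigenvalue_root_char.
move=> /eigenvalueP [z zA zN0]; exists (qK / qB), z^T; split.
  by apply: contra zN0 => /eqP zT0; rewrite -[z]trmxK zT0 trmx0.
have zK : z *m K = (qK / qB) *: (z *m B) by rewrite -AB mulmxA zA -scalemxAl.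
by rewrite -{1}Ks -(proj1 Bspd) -!trmx_mul zK linearZ.
Qed.

Lemma pencil_diag n (K B : 'M[R]_n) : K^T = K -> spd B ->
  exists p (X : 'M[R]_(n, p)) (d : 'rV[R]_p),
    [/\ p = n, X^T *m B *m X = 1%:M & X^T *m K *m X = diag_mx d].
Proof.
have [k] := ubnP n; elim: k n K B => // k IH [|n] K B ltnk Ks Bspd.
  exists 0%N, 0, 0; split => //; apply/matrixP => [[]]//.
have [lam [u [uN0 Ku]]] := pencil_eig (ltn0Sn n) Ks Bspd.
have [Bs Bp] := Bspd.
set s := qform B u; have s0 : 0 < s by apply: Bp.
set w := (Num.sqrt s)^-1 *: u.
have sq0 : 0 < Num.sqrt s by rewrite sqrtr_gt0.
have wBw : w^T *m B *m w = 1%:M.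
  rewrite /w !linearZ /= -!scalemxAl [u^T *m B *m u]mx11_scalar -/(qform B u) -/s.
  rewrite !scale_scalar_mx mulrA -expr2 exprVn sqr_sqrtr ?ltW // mulVf ?gt_eqF //.
have Kw : K *m w = lam *: (B *m w) by rewrite /w -!scalemxAr Ku scalerA mulrC -scalerA.
have wK : w^T *m K = lam *: (w^T *m B).
  by rewrite -{1}Ks -Bs -!trmx_mul Kw linearZ.
have wN0 : w != 0 by rewrite scaler_eq0 negb_or invr_eq0 gt_eqF.
set c := B *m w.
have cN0 : c != 0.
  by apply: contra wN0 => /eqP c0; apply/eqP; apply: (spd_ker Bspd).
set Z := kermx c; set Y0 := (row_base Z)^T.
have Yc : Y0^T *m c = 0 by rewrite trmxK; apply/sub_kermxP; rewrite eq_row_base.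
have YBw : Y0^T *m B *m w = 0 by rewrite -mulmxA.
have wBY : w^T *m B *m Y0 = 0.
  by apply: trmx_inj; rewrite trmx0 !trmx_mul trmxK Bs trmxK -[row_base Z]trmxK.
have wKY : w^T *m K *m Y0 = 0 by rewrite wK -scalemxAl wBY scaler0.
have YKw : Y0^T *m K *m w = 0 by rewrite -mulmxA Kw -scalemxAr mulmxA YBw scaler0.
have rc : \rank c = 1%N.
  apply/eqP; rewrite eqn_leq rank_leq_col lt0n mxrank_eq0 cN0 //.
have rZ : \rank Z = n by rewrite /Z mxrank_ker rc subn1.
set Kr := Y0^T *m K *m Y0; set Br := Y0^T *m B *m Y0.
have Krs : Kr^T = Kr by rewrite /Kr !trmx_mul trmxK Ks mulmxA.
have Brspd : spd Br.
  split; first by rewrite /Defs.symmetric /Br !trmx_mul trmxK Bs mulmxA.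
  move=> z zN0; rewrite /qform /Br.
  have -> : z^T *m (Y0^T *m B *m Y0) *m z = (Y0 *m z)^T *m B *m (Y0 *m z).
    by rewrite trmx_mul !mulmxA.
  apply: Bp; apply: contra zN0 => /eqP Yz0.
  have : z^T *m row_base Z == 0 by rewrite -[row_base Z]trmxK -trmx_mul Yz0 trmx0.
  rewrite mulmx_free_eq0 ?row_base_free // => /eqP zT0.
  by rewrite -[z]trmxK zT0 trmx0.
have [|p' [X' [d' [p'E X'B X'K]]]] := IH _ Kr Br _ Krs Brspd.
  by rewrite rZ -ltnS (leq_trans _ ltnk).
exists (1 + p')%N, (row_mx w (Y0 *m X')), (row_mx (lam%:M : 'rV_1) d').
split.
- by rewrite p'E rZ.
- rewrite tr_row_mx mul_col_mx mul_col_row wBw (scalar_mx_block 1 p').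
  congr block_mx.
  + by rewrite mulmxA wBY mul0mx.
  + by rewrite trmx_mul -!mulmxA (mulmxA Y0^T) YBw mulmx0.
  + by rewrite -X'B /Br trmx_mul !mulmxA.
- rewrite tr_row_mx mul_col_mx mul_col_row diag_mx_row.
  have -> : w^T *m K *m w = lam%:M by rewrite wK -scalemxAl wBw scalemx1.
  congr block_mx.
  + by apply/matrixP=> i j; rewrite !ord1 !mxE.
  + by rewrite mulmxA wKY mul0mx.
  + by rewrite trmx_mul -!mulmxA (mulmxA Y0^T) YKw mulmx0.
  + by rewrite -X'K /Kr trmx_mul !mulmxA.
Qed.

Lemma sort_perm_exists n (d : 'I_n -> R) :
  exists p : 'S_n, forall i j : 'I_n, (i <= j)%N -> d (p i) <= d (p j).
Proof.
pose t := [tuple d i | i < n].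
have : perm_eq (sort <=%R (t : seq R)) t by rewrite perm_sort.
case/tuple_permP => p ps; exists p => i j ij.
have st : sorted <=%R (sort <=%R (t : seq R)) by apply: sort_sorted; exact: le_total.
have := le_sorted_leq_nth 0 st; rewrite ps size_tuple => /(_ i j).
rewrite !inE !ltn_ord => /(_ isT isT ij).
by rewrite -!tnth_nth !tnth_mktuple.
Qed.

Lemma pencil_sorted n (K B : 'M[R]_n) : K^T = K -> spd B ->
  exists (X : 'M[R]_n) (d : 'I_n -> R),
    [/\ X^T *m B *m X = 1%:M, X^T *m K *m X = diag_mx (\row_i d i) &
        forall i j : 'I_n, (i <= j)%N -> d i <= d j].
Proof.
move=> Ks Bspd; have [p [X [d0 [pn XB XK]]]] := pencil_diag Ks Bspd.
subst p; have [s sP] := sort_perm_exists (fun i => d0 0 i).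
exists (X *m perm_mx s^-1), (fun i => d0 0 (s i)); split => //.
- by rewrite trmx_mul tr_perm_mx invgK !mulmxA -(mulmxA (perm_mx s) X^T)
    -(mulmxA (perm_mx s) (X^T *m B)) XB mulmx1 -perm_mxM mulgV perm_mx1.
- rewrite trmx_mul tr_perm_mx invgK !mulmxA -(mulmxA (perm_mx s) X^T)
    -(mulmxA (perm_mx s) (X^T *m K)) XK.
  rewrite -row_permE -col_permE; apply/matrixP => i j; rewrite !mxE.
  by rewrite (inj_eq perm_inj).
Qed.

Lemma prod_sign (s : seq R) :
  \prod_(x <- s) (x%:P - 'X) = (-1)^+size s * \prod_(x <- s) ('X - x%:P).
Proof.
elim: s => [|x s IH]; first by rewrite !big_nil expr0 mul1r.
rewrite !big_cons IH /= exprS; ring.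
Qed.

Lemma geneig_list_unique n (K B : 'M[R]_n) s t : B \in unitmx ->
  is_geneig_list K B s -> is_geneig_list K B t -> s = t.
Proof.
move=> Bu [ss sos ps] [st sot pt].
apply: (sorted_eq le_trans le_anti) => //; apply: prod_XsubC_eq.
have dB : \det B != 0 by rewrite -unitfE -unitmxE.
have := ps; rewrite pt => /(scalerI dB); rewrite !prod_sign ss st.
by move/(can_inj (signrMK n)) ->.
Qed.

Lemma pencil_poly_diag n (K B X : 'M[R]_n) (d : 'I_n -> R) :
  X^T *m B *m X = 1%:M -> X^T *m K *m X = diag_mx (\row_i d i) ->
  pencil_poly K B = \det B *: \prod_i ((d i)%:P - 'X).
Proof.
move=> XB XK; set P := map_mx polyC X.
have E : P^T *m (map_mx polyC K - 'X *: map_mx polyC B) *m P =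
         diag_mx (\row_i ((d i)%:P - 'X)).
  rewrite /P mulmxBr mulmxBl -scalemxAr -scalemxAl map_trmx -!map_mxM XB XK.
  apply/matrixP => i j; rewrite !mxE; case: eqP => _ /=.
    by rewrite mulr1.
  by rewrite mulr0 subr0.
have dX : \det X * \det B * \det X = 1.
  by rewrite -{1}det_tr -!det_mulmx XB det1.
have := congr1 determinant E; rewrite !det_mulmx det_tr det_diag.
under [\prod_i _]eq_bigr do rewrite mxE.
rewrite /P det_map_mx /= => E2.
rewrite /pencil_poly -mul_polyC -E2 mulrA mulrC !mulrA -!rmorphM /= mulrC.
by rewrite dX mulr1.
Qed.

Lemma geneig_eq n (K B X : 'M[R]_n) (d : 'I_n -> R) : spd B ->
  X^T *m B *m X = 1%:M -> X^T *m K *m X = diag_mx (\row_i d i) ->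
  (forall i j : 'I_n, (i <= j)%N -> d i <= d j) ->
  forall i : 'I_n, geneig K B i = d i.
Proof.
move=> Bspd XB XK dmono i.
set s := [seq d i | i <- enum 'I_n].
have Hs : is_geneig_list K B s.
  split; first by rewrite size_map size_enum_ord.
    rewrite /s -[enum 'I_n]/(enum 'I_n); apply: (homo_sorted (e := fun i j : 'I_n => (i <= j)%N)).
      by move=> x y; apply: dmono.
    by have := iota_sorted 0 n; rewrite -val_enum_ord sorted_map.
  by rewrite (pencil_poly_diag XB XK) big_map big_enum.
have := geneig_list_unique (spd_unit Bspd) Hs (xgetI [::] Hs).
rewrite /geneig /geneigs => <-.
by rewrite (nth_map i) ?size_enum_ord // nth_ord_enum.
Qed.

Lemma geneig_spec n (K B : 'M[R]_n) : K^T = K -> spd B ->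
  exists (X : 'M[R]_n) (d : 'I_n -> R),
    [/\ X^T *m B *m X = 1%:M, X^T *m K *m X = diag_mx (\row_i d i),
        forall i j : 'I_n, (i <= j)%N -> d i <= d j &
        forall i : 'I_n, geneig K B i = d i].
Proof.
move=> Ks Bspd; have [X [d [XB XK dm]]] := pencil_sorted Ks Bspd.
by exists X, d; split => //; apply: geneig_eq XB XK dm.
Qed.

Lemma qform_mul n (A X : 'M[R]_n) c : qform A (X *m c) = qform (X^T *m A *m X) c.
Proof. by rewrite /qform trmx_mul !mulmxA. Qed.

Lemma qform_diag n (d : 'I_n -> R) c :
  qform (diag_mx (\row_i d i)) c = \sum_j d j * c j 0 ^+ 2.
Proof.
rewrite /qform mul_mx_diag mxE; apply: eq_bigr => j _; rewrite !mxE; ring.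
Qed.

Lemma qform_id n (c : 'cV[R]_n) : qform 1%:M c = \sum_j c j 0 ^+ 2.
Proof.
rewrite /qform mulmx1 mxE; apply: eq_bigr => j _; rewrite !mxE; ring.
Qed.

Lemma sum_le_top n (d : 'I_n -> R) (c : 'cV[R]_n) i :
  (forall j, d j <= d i \/ c j 0 = 0) ->
  \sum_j d j * c j 0 ^+2 <= d i * \sum_j c j 0 ^+2.
Proof.
move=> H; rewrite mulr_sumr; apply: ler_sum => j _.
case: (H j) => [h|->]; last by rewrite expr0n /= !mulr0.
by apply: ler_wpM2r => //; apply: sqr_ge0.
Qed.

Lemma sum_ge_bot n (d : 'I_n -> R) (c : 'cV[R]_n) i :
  (forall j, d i <= d j \/ c j 0 = 0) ->
  d i * \sum_j c j 0 ^+2 <= \sum_j d j * c j 0 ^+2.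
Proof.
move=> H; rewrite mulr_sumr; apply: ler_sum => j _.
case: (H j) => [h|->]; last by rewrite expr0n /= !mulr0.
by apply: ler_wpM2r => //; apply: sqr_ge0.
Qed.

Lemma pid_diag n r : (pid_mx r : 'M[R]_n) = diag_mx (\row_j ((j < r)%N)%:R).
Proof.
apply/matrixP => i j; rewrite !mxE; case: (eqVneq i j) => [->|ij].
  by rewrite eqxx.
by rewrite val_eqE (negbTE ij) andFb mulr0n.
Qed.

Lemma copid_diag n r : (copid_mx r : 'M[R]_n) = diag_mx (\row_j ((r <= j)%N)%:R).
Proof.
apply/matrixP => i j; rewrite /copid_mx pid_diag !mxE; case: (eqVneq i j) => [->|ij].
  by case: (ltnP j r) => _ /=; rewrite ?mulr1n ?subrr ?subr0.
by rewrite !mulr0n subr0.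
Qed.

Lemma X_unit n (B X : 'M[R]_n) : X^T *m B *m X = 1%:M -> X \in unitmx.
Proof.
move=> XB; rewrite unitmxE unitfE; apply/eqP => dX.
by move: (congr1 determinant XB); rewrite !det_mulmx dX mulr0 det1 => /eqP; rewrite eq_sym oner_eq0.
Qed.

Lemma geneig_cmp n (K B1 B2 : 'M[R]_n) (c : R) : psd K -> spd B1 -> spd B2 ->
  0 < c -> (forall x, qform B2 x <= c * qform B1 x) ->
  forall i : 'I_n, geneig K B1 i <= c * geneig K B2 i.
Proof.
move=> [Ks Kp] B1spd B2spd c0 Hc i.
have [X1 [d1 [X1B X1K d1m ->]]] := geneig_spec Ks B1spd.
have [X2 [d2 [X2B X2K d2m ->]]] := geneig_spec Ks B2spd.
pose S : 'M[R]_n := pid_mx i.+1 *m X2^T; pose T : 'M[R]_n := copid_mx i *m X1^T.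
have X1u := X_unit X1B; have X2u := X_unit X2B.
have rS : \rank S = i.+1.
  by rewrite /S mxrankMfree ?row_free_unit ?unitmx_tr // rank_pid_mx.
have rT : \rank T = (n - i)%N.
  by rewrite /T mxrankMfree ?row_free_unit ?unitmx_tr // rank_copid_mx // ltnW.
have rcap : (0 < \rank (S :&: T))%N.
  have := mxrank_sum_cap S T; rewrite rS rT.
  have := rank_leq_col (S + T)%MS; have := ltn_ord i; lia.
have : (S :&: T)%MS != 0 by rewrite -mxrank_eq0 -lt0n.
case/matrix0Pn => j [k Hjk].
set v := row j (S :&: T)%MS.
have vN0 : v != 0.
  have Hv : v 0 k != 0 by rewrite /v mxE.
  by apply: contraNneq Hv => ->; rewrite mxE.
have : (v <= S :&: T)%MS by apply: row_sub.
rewrite sub_capmx => /andP [/submxP [a va] /submxP [b vb]].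
pose c2 := (a *m (pid_mx i.+1 : 'M[R]_n))^T; pose c1 := (b *m (copid_mx i : 'M[R]_n))^T.
have x2 : v^T = X2 *m c2 by rewrite va /S mulmxA trmx_mul trmxK.
have x1 : v^T = X1 *m c1 by rewrite vb /T mulmxA trmx_mul trmxK.
have xN0 : v^T != 0 by apply: contraNneq vN0 => vT0; rewrite -[v]trmxK vT0 trmx0.
have qK2 : qform K v^T <= d2 i * qform B2 v^T.
  rewrite x2 !qform_mul X2K X2B qform_diag qform_id; apply: sum_le_top => l.
  case: (leqP l i) => li; first by left; apply: d2m.
  by right; rewrite /c2 pid_diag mul_mx_diag !mxE ltnS leqNgt li mulr0.
have qK1 : d1 i * qform B1 v^T <= qform K v^T.
  rewrite x1 !qform_mul X1K X1B qform_diag qform_id; apply: sum_ge_bot => l.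
  case: (leqP i l) => li; first by left; apply: d1m.
  by right; rewrite /c1 copid_diag mul_mx_diag !mxE leqNgt li mulr0.
have q1 : 0 < qform B1 v^T by apply: (proj2 B1spd).
have q2 : 0 < qform B2 v^T by apply: (proj2 B2spd).
have d20 : 0 <= d2 i.
  rewrite leNgt; apply/negP => d2n.
  have := le_trans (Kp v^T) qK2; rewrite leNgt => /negP; apply.
  by rewrite pmulr_llt0.
rewrite -(ler_pM2r q1) -mulrA (le_trans qK1) // (le_trans qK2) //.
by rewrite mulrCA ler_wpM2l // Hc.
Qed.

Lemma qform_mulr m r (A : 'M[R]_m) (X : 'M[R]_(m, r)) c :
  qform A (X *m c) = qform (X^T *m A *m X) c.
Proof. by rewrite /qform trmx_mul !mulmxA. Qed.

Lemma qformD n (A B : 'M[R]_n) x : qform (A + B) x = qform A x + qform B x.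
Proof. by rewrite /qform mulmxDr mulmxDl mxE. Qed.

Lemma qformZ n (A : 'M[R]_n) a x : qform (a *: A) x = a * qform A x.
Proof. by rewrite /qform -scalemxAr -scalemxAl mxE. Qed.

Lemma addmxE' m n (A B : 'M[R]_(m, n)) i j : (A + B) i j = A i j + B i j.
Proof. by rewrite mxE. Qed.

Lemma qform_add n (M : 'M[R]_n) y w : M^T = M ->
  qform M (y + w) = qform M y + qform M w + 2 * (y^T *m M *m w) 0 0.
Proof.
move=> Ms; rewrite /qform mulmxDr [(y + w)^T]linearD /= !mulmxDl !addmxE'.
have -> : (w^T *m M *m y) 0 0 = (y^T *m M *m w) 0 0.
  by rewrite -[w^T *m M *m y]trmx11 !trmx_mul trmxK Ms mulmxA.
rewrite mulr2n mulrDl mul1r; ring.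
Qed.

Lemma proj_bound m r (M : 'M[R]_m) (U : 'M[R]_(m, r)) (x : 'cV[R]_m) :
  psd M -> U^T *m M *m U = 1%:M ->
  qform 1%:M ((M *m U)^T *m x) <= qform M x.
Proof.
move=> [Ms Mp] UMU; set z := (M *m U)^T *m x.
have zE : z = U^T *m M *m x by rewrite /z trmx_mul Ms.
have -> : x = U *m z + (x - U *m z) by rewrite addrC subrK.
rewrite qform_add // qform_mulr UMU.
have -> : ((U *m z)^T *m M *m (x - U *m z)) = 0.
  have H0 : U^T *m M *m (x - U *m z) = 0.
    by rewrite mulmxBr -zE mulmxA UMU mul1mx subrr.
  by rewrite trmx_mul -!mulmxA (mulmxA U^T) H0 mulmx0.
rewrite mxE mulr0 addr0 -[X in _ <= X]addr0 -addrA.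
by rewrite addr0 lerDl; apply: Mp.
Qed.

Lemma mbar_bounds m r (M : 'M[R]_m) (U : 'M[R]_(m, r)) (g : 'rV[R]_r) (c : R) :
  psd M -> U^T *m M *m U = 1%:M -> 1 <= c ->
  (forall k, 0 <= g 0 k) -> (forall k, g 0 k <= c - 1) ->
  forall x, qform M x <= qform (M + M *m U *m diag_mx g *m (M *m U)^T) x /\
            qform (M + M *m U *m diag_mx g *m (M *m U)^T) x <= c * qform M x.
Proof.
move=> Mpsd UMU c1 g0 gc x; rewrite qformD.
set z := (M *m U)^T *m x.
have qW : qform (M *m U *m diag_mx g *m (M *m U)^T) x = \sum_k g 0 k * z k 0 ^+ 2.
  have -> : diag_mx g = diag_mx (\row_k g 0 k) by congr diag_mx; apply/rowP => k; rewrite mxE.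
  by rewrite -qform_diag /qform /z !trmx_mul !trmxK !mulmxA.
rewrite qW; split.
  by rewrite lerDl sumr_ge0 // => k _; rewrite mulr_ge0 ?sqr_ge0.
have : \sum_k g 0 k * z k 0 ^+ 2 <= (c - 1) * qform 1%:M z.
  rewrite qform_id mulr_sumr; apply: ler_sum => k _.
  by apply: ler_wpM2r => //; apply: sqr_ge0.
move/le_trans => /(_ ((c - 1) * qform M x)) H.
have : \sum_k g 0 k * z k 0 ^+ 2 <= (c - 1) * qform M x.
  by apply: H; rewrite ler_wpM2l ?subr_ge0 // proj_bound.
move=> H2; apply: (le_trans (lerD (lexx _) H2)); rewrite mulrBl mul1r addrC subrK //.
Qed.

Lemma restr_mulE m n (idx : 'I_m -> 'I_n) (x : 'cV[R]_n) (k : 'I_m) :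
  (restr_mx R idx *m x) k 0 = x (idx k) 0.
Proof.
rewrite mxE (bigD1 (idx k)) //= !mxE eqxx mul1r big1 ?addr0 // => j jn.
by rewrite mxE eq_sym (negbTE jn) mul0r.
Qed.

Lemma qform_assemble N m n (idx : 'I_N -> 'I_m -> 'I_n) (A : 'I_N -> 'M[R]_m) x :
  qform (assemble idx A) x = \sum_e qform (A e) (restr_mx R (idx e) *m x).
Proof.
rewrite /qform /assemble mulmx_sumr mulmx_suml summxE; apply: eq_bigr => e _.
by rewrite trmx_mul !mulmxA.
Qed.

Lemma assemble_sym N m n (idx : 'I_N -> 'I_m -> 'I_n) (A : 'I_N -> 'M[R]_m) :
  (forall e, (A e)^T = A e) -> (assemble idx A)^T = assemble idx A.
Proof.
move=> As; rewrite /assemble linear_sum; apply: eq_bigr => e _ /=.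
by rewrite !trmx_mul trmxK As mulmxA.
Qed.

Lemma geneig_mono n (K B : 'M[R]_n) : K^T = K -> spd B ->
  forall i j, (i <= j)%N -> (j < n)%N -> geneig K B i <= geneig K B j.
Proof.
move=> Ks Bspd i j ij jn; have [X [d [_ _ dm Hg]]] := geneig_spec Ks Bspd.
have iN : (i < n)%N by apply: leq_ltn_trans jn.
by rewrite (Hg (Ordinal iN)) (Hg (Ordinal jn)); apply: dm.
Qed.

Lemma geneig_pos n (K B : 'M[R]_n) : spd K -> spd B ->
  forall i : 'I_n, 0 < geneig K B i.
Proof.
move=> [Ks Kp] Bspd i; have [X [d [XB XK _ Hg]]] := geneig_spec Ks Bspd.
rewrite Hg; pose e : 'cV[R]_n := delta_mx i 0.
have -> : d i = qform K (X *m e).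
  rewrite qform_mul XK qform_diag (bigD1 i) //= big1 ?addr0.
    by rewrite mxE !eqxx expr1n mulr1.
  by move=> j ji; rewrite mxE (negbTE ji) expr0n /= mulr0.
apply: Kp; apply/negP => /eqP Xe.
have : e = 0 by rewrite -[e](mulKmx (X_unit XB)) Xe mulmx0.
by move/matrixP/(_ i 0); rewrite !mxE !eqxx => /eqP; rewrite oner_eq0.
Qed.

Lemma assemble_spd N m n (idx : 'I_N -> 'I_m -> 'I_n) (A : 'I_N -> 'M[R]_m) :
  (forall e, spd (A e)) -> (forall j, exists e k, idx e k = j) ->
  spd (assemble idx A).
Proof.
move=> HA cover; split; first by apply: assemble_sym => e; case: (HA e).
move=> x xN0; rewrite qform_assemble.
have [j [l xj]] := matrix0Pn _ xN0; rewrite ord1 in xj.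
have [e [k ek]] := cover j.
rewrite (bigD1 e) //= ltr_wpDr ?sumr_ge0 // => [f _|]; first by apply: spd_ge0.
apply: (proj2 (HA e)); apply/negP => /eqP H.
by move: xj; rewrite -ek -restr_mulE H mxE eqxx.
Qed.

End Work.

Unset Implicit Arguments.
Set Strict Implicit.

Theorem mainTheorem4 (R : realType) (n N m r : nat)
  (idx : 'I_N -> 'I_m -> 'I_n)
  (Ke Me : 'I_N -> 'M[R]_m)
  (U2 : 'I_N -> 'M[R]_(m, r)) :
  (forall e, injective (idx e)) ->
  (forall j : 'I_n, exists e k, idx e k = j) ->
  (forall e, psd (Ke e)) ->
  spd (assemble idx Ke) ->
  (forall e, spd (Me e)) ->
  (0 < r < m)%N ->
  (forall e, 0 < geneig (Ke e) (Me e) (m - r).-1) ->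
  (* columns of U2 e: M_e-orthonormal eigenvectors for lambda_{m-r+1..m} *)
  (forall e, (U2 e)^T *m Me e *m U2 e = 1%:M) ->
  (forall e, Ke e *m U2 e =
     Me e *m U2 e *m diag_mx (\row_(k < r) geneig (Ke e) (Me e) (m - r + k))) ->
  let g e (l : R) := l / geneig (Ke e) (Me e) (m - r).-1 - 1 in
  let Mbar e := Me e + (Me e *m U2 e)
        *m diag_mx (\row_(k < r) g e (geneig (Ke e) (Me e) (m - r + k)))
        *m (Me e *m U2 e)^T in
  let K := assemble idx Ke in
  let M := assemble idx Me in
  let Mb := assemble idx Mbar in
  forall i : 'I_n,
    1 <= Num.sqrt (geneig K M i) / Num.sqrt (geneig K Mb i) /\
    Num.sqrt (geneig K M i) / Num.sqrt (geneig K Mb i) <=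
      \big[Num.max/0]_(e < N)
        (Num.sqrt (geneig (Ke e) (Me e) m.-1) /
         Num.sqrt (geneig (Ke e) (Me e) (m - r).-1)).
Proof.
move=> _ cover Kpsd Kspd Mspd /andP [r0 rm] lam0 UMU _ g Mbar K M Mb i.
pose lo e := geneig (Ke e) (Me e) (m - r).-1.
pose hi e := geneig (Ke e) (Me e) m.-1.
pose s e := Num.sqrt (hi e) / Num.sqrt (lo e).
set S := \big[Num.max/0]_(e < N) _.
have Ks e : (Ke e)^T = Ke e by case: (Kpsd e).
have m0 : (0 < m)%N by apply: leq_trans rm.
have lohi e : lo e <= hi e.
  by apply: geneig_mono => //; lia.
have glo e k : (k < r)%N -> lo e <= geneig (Ke e) (Me e) (m - r + k).
  by move=> kr; apply: geneig_mono => //; lia.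
have ghi e k : (k < r)%N -> geneig (Ke e) (Me e) (m - r + k) <= hi e.
  by move=> kr; apply: geneig_mono => //; lia.
pose c e := hi e / lo e.
have hi0 e : 0 < hi e by apply: lt_le_trans (lam0 e) (lohi e).
have c1 e : 1 <= c e by rewrite /c ler_pdivlMr ?mul1r ?lohi ?(lam0 e).
have sE e : s e ^+ 2 = c e.
  by rewrite /s expr_div_n !sqr_sqrtr // ltW ?(lam0 e).
have s0 e : 0 <= s e by rewrite divr_ge0 ?sqrtr_ge0.
have sS e : s e <= S by rewrite /S; apply/bigmax_geP; right; exists e.
have cC e : c e <= S ^+ 2 by rewrite -sE !expr2 ler_pM.
have [e0 _] := cover i.
have S0 : 0 <= S := le_trans (s0 e0) (sS e0).
have C1 : 1 <= S ^+ 2 := le_trans (c1 e0) (cC e0).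
have C0 : 0 < S ^+ 2 := lt_le_trans ltr01 C1.
have Mpsd e : psd (Me e).
  by split; [case: (Mspd e) | move=> x; apply: spd_ge0].
have Hel e (y : 'cV_m) : qform (Me e) y <= qform (Mbar e) y /\
                         qform (Mbar e) y <= S ^+ 2 * qform (Me e) y.
  have [||h1 h2] := @mbar_bounds _ m r (Me e) (U2 e)
      (\row_(k < r) g e (geneig (Ke e) (Me e) (m - r + k))) (c e) (Mpsd e) (UMU e) (c1 e) _ _ y.
  - move=> k; rewrite mxE /g subr_ge0 ler_pdivlMr // mul1r; exact: glo.
  - move=> k; rewrite mxE /g lerB // ler_pM2r ?invr_gt0 //; exact: ghi.
  split => //; apply: le_trans h2 _; apply: ler_wpM2r; first exact: spd_ge0.
  exact: cC.
have HM x : qform M x <= qform Mb x.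
  by rewrite /M /Mb !qform_assemble; apply: ler_sum => e _; exact: (proj1 (Hel e _)).
have HMb x : qform Mb x <= S ^+ 2 * qform M x.
  rewrite /M /Mb !qform_assemble mulr_sumr; apply: ler_sum => e _.
  exact: (proj2 (Hel e _)).
have Mspd' : spd M by apply: assemble_spd.
have Mbspd : spd Mb.
  split.
    apply: assemble_sym => e; rewrite /Mbar linearD /= !trmx_mul tr_diag_mx !trmxK.
    by have [-> _] := Mspd e; rewrite !mulmxA.
  by move=> x xN0; apply: lt_le_trans (proj2 Mspd' x xN0) (HM x).
have Kpsd' : psd K by split; [case: Kspd | move=> x; apply: spd_ge0].
have ab : geneig K Mb i <= 1 * geneig K M i.
  by apply: geneig_cmp => // x; rewrite mul1r.
have ba : geneig K M i <= S ^+ 2 * geneig K Mb i by apply: geneig_cmp.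
rewrite mul1r in ab.
have a0 : 0 < geneig K M i by apply: geneig_pos.
have b0 : 0 < geneig K Mb i by apply: geneig_pos.
have sb0 : 0 < Num.sqrt (geneig K Mb i) by rewrite sqrtr_gt0.
split.
  by rewrite ler_pdivlMr // mul1r ler_sqrt // ltW.
rewrite ler_pdivrMr // -[S]ger0_norm // -sqrtr_sqr -sqrtrM ?sqr_ge0 //.
by rewrite ler_sqrt // mulr_ge0 ?sqr_ge0 // ltW.
Qed.
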